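(* Consider Algorithm MWHVC (described in the context) run on a hypergraph $G=(V,E)$ of rank $f$ with nonnegative vertex weights $w$, with parameters $\varepsilon\in(0,1]$, $\beta=\varepsilon/(f+\varepsilon)$ and multiplier $\alpha>1$. Upon termination, the set $C$ is a vertex cover of $G$ (every hyperedge intersects $C$) and $w(C)\le (f+\varepsilon)\cdot\mathrm{opt}$, where $\mathrm{opt}$ is the cost of an optimal fractional weighted vertex cover of $G$; i.e. the approximation ratio of the algorithm is $f+\varepsilon$.
   Context: Let $G=(V,E)$ be a hypergraph: each hyperedge is a nonempty subset of $V$ of size at most $f$ (rank $f$). Vertices have nonnegative weights $w(v)$, and $w(U)=\sum_{v\in U}w(v)$. For $v\in V$, $E(v)=\{e\in E: v\in e\}$; $\Delta=\max_v |E(v)|\ge 3$. A hyperedge $e$ is covered by $C\subseteq V$ if $e\cap C\neq\emptyset$. The optimal fractional vertex cover value $\mathrm{opt}$ is the minimum of $\sum_v w(v)x(v)$ subject to $\sum_{v\in e}x(v)\ge 1$ for all $e\in E$ and $x\ge 0$. The computation is distributed in synchronous rounds on the bipartite network with node set $V\cup E$ and a link between $v$ and $e$ iff $v\in e$. Parameters: $\varepsilon\in(0,1]$, $\beta=\varepsilon/(f+\varepsilon)$, and a multiplier $\alpha>1$. Algorithm MWHVC: Initialize $C\gets\emptyset$ and $E'(v)\gets E(v)$ for every $v$. Iteration $0$: every hyperedge $e$ sets $\mathrm{deal}_0(e)=\beta\cdot\min_{v\in e} w(v)/|E(v)|$ and $\delta_0(e)=\mathrm{deal}_0(e)$. For $i=1,2,\dots$: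 (a) every vertex $v\notin C$ (not terminated) checks whether $\sum_{e\in E(v)}\delta_{i-1}(e)\ge(1-\beta)w(v)$; if so, $v$ joins $C$, tells every $e\in E'(v)$ that $e$ is covered, and terminates. (b) Every uncovered hyperedge that receives such a message becomes covered, informs all its vertices, and terminates. (c) Every vertex $v\notin C$ that is told $e$ is covered sets $E'(v)\gets E'(v)\setminus\{e\}$; if $E'(v)=\emptyset$, $v$ terminates without joining $C$. (d) Every vertex $v\notin C$ sends ''raise'' to all $e\in E'(v)$ if $\sum_{e\in E'(v)}\mathrm{deal}_{i-1}(e)\le(\beta/\alpha)w(v)$, and otherwise sends ''stuck'' to all $e\in E'(v)$. (e) Every uncovered hyperedge $e$ sets $\mathrm{deal}_i(e)=\mathrm{deal}_{i-1}(e)$ if it received some ''stuck'' message, and $\mathrm{deal}_i(e)=\alpha\cdot\mathrm{deal}_{i-1}(e)$ otherwise, and $\delta_i(e)=\delta_{i-1}(e)+\mathrm{deal}_i(e)$. A vertex terminates when it is in $C$ or all its hyperedges are covered; a hyperedge terminates when covered. *)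

(* Defs.v *)
From HB Require Import structures.
From mathcomp Require Import all_boot all_order all_algebra.
Set Implicit Arguments. Unset Strict Implicit. Unset Printing Implicit Defensive.
Import Order.TTheory GRing.Theory Num.Theory.
Local Open Scope ring_scope.

Section MWHVC.
Variables (R : realFieldType) (V : finType) (E : {set {set V}}).

Definition edges_of (v : V) : {set {set V}} := [set e in E | v \in e].

(* minimum of g over a (nonempty) set e; 0 on the empty set (never used). *)
Definition setmin (g : V -> R) (e : {set V}) : R :=
  if enum e is x :: s then \big[Order.min/g x]_(y <- s) g y else 0.

Definition frac_cover (x : V -> R) : Prop :=
  (forall v, 0 <= x v) /\ (forall e, e \in E -> 1 <= \sum_(v in e) x v).

Definition is_vertex_cover (C : {set V}) : Prop :=
  forall e, e \in E -> e :&: C != set0.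

Variables (w : V -> R) (eps alpha : R) (f : nat).

Definition mwhvc_beta : R := eps / (f%:R + eps).

Record state := State {
  st_C : {set V};
  st_cov : {set {set V}};
  st_deal : {set V} -> R;
  st_delta : {set V} -> R }.

Definition vterminated (s : state) (v : V) : bool :=
  (v \in st_C s) || (edges_of v \subset st_cov s).

Definition deal0 (e : {set V}) : R :=
  mwhvc_beta * setmin (fun v => w v / (#|edges_of v|)%:R) e.

Definition init_state : state := State set0 set0 deal0 deal0.

(* Iteration i >= 1, steps (a)-(e). For an uncovered hyperedge e and a
   non-terminated vertex v not in C, E'(v) = E(v) minus the covered edges. *)
Definition step (s : state) : state :=
  let J := [set v | ~~ vterminated s v &
                   (1 - mwhvc_beta) * w v <= \sum_(e in edges_of v) st_delta s e] in
  let C' := st_C s :|: J in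
  let cov' := st_cov s :|: [set e in E | [exists v in e, v \in J]] in
  let stuck v := mwhvc_beta / alpha * w v < \sum_(e in edges_of v :\: cov') st_deal s e in
  let deal' e := if e \in cov' then st_deal s e
                 else if [exists v in e, stuck v] then st_deal s e
                 else alpha * st_deal s e in
  let delta' e := if e \in cov' then st_delta s e else st_delta s e + deal' e in
  State C' cov' deal' delta'.

(* state after i iterations (iterations 1..i following iteration 0) *)
Definition run (i : nat) : state := iter i step init_state.

Definition terminated (s : state) : bool :=
  [forall v, vterminated s v] && [forall e in E, e \in st_cov s].

End MWHVC.

(* Main.v *)
Require Import Defs.
From HB Require Import structures.
From mathcomp Require Import all_boot all_order all_algebra.
From mathcomp Require Import lra.
Set Implicit Arguments. Unset Strict Implicit. Unset Printing Implicit Defensive.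
Import Order.TTheory GRing.Theory Num.Theory.
Local Open Scope ring_scope.

Lemma setmin_le (R : realFieldType) (V : finType) (g : V -> R) (e : {set V}) v :
  v \in e -> setmin g e <= g v.
Proof.
rewrite /setmin -mem_enum; case: (enum e) => [//|x s].
rewrite inE => /orP[/eqP->|].
  elim: s => [|y s IH]; first by rewrite big_nil.
  by rewrite big_cons ge_min IH orbT.
elim: s => [//|y s IH]; rewrite inE big_cons => /orP[/eqP->|/IH H].
  by rewrite ge_min lexx.
by rewrite ge_min H orbT.
Qed.

Lemma setmin_ge0 (R : realFieldType) (V : finType) (g : V -> R) (e : {set V}) :
  (forall v, 0 <= g v) -> 0 <= setmin g e.
Proof.
move=> H; rewrite /setmin; case: (enum e) => [//|x s].
elim: s => [|y s IH]; first by rewrite big_nil.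
by rewrite big_cons le_min H IH.
Qed.

Lemma sum_exch (R : realFieldType) (V : finType) (E : {set {set V}}) (F : V -> {set V} -> R) :
  \sum_v \sum_(e in edges_of E v) F v e = \sum_(e in E) \sum_(v in e) F v e.
Proof.
rewrite (exchange_big_dep (fun e => e \in E)) /=; last by move=> v e _; rewrite inE => /andP[].
apply: eq_bigr => e eE; apply: eq_bigl => v; by rewrite inE eE.
Qed.

Definition Inv (R : realFieldType) (V : finType) (E : {set {set V}}) (w : V -> R) (b : R) (s : state R V) : Prop :=
 (forall e, 0 <= st_deal s e) /\ (forall e, 0 <= st_delta s e) /\
   (forall v, \sum_(e in edges_of E v :\: st_cov s) st_deal s e <= b * w v) /\
   (forall v, \sum_(e in edges_of E v) st_delta s e <= w v) /\
   (forall v, v \in st_C s -> edges_of E v \subset st_cov s) /\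
   (forall e, e \in st_cov s -> (e \in E) && (e :&: st_C s != set0)) /\
   (forall v, v \in st_C s -> (1 - b) * w v <= \sum_(e in edges_of E v) st_delta s e).

Lemma Inv0 (R : realFieldType) (V : finType) (E : {set {set V}}) (w : V -> R) eps f :
  (forall v, 0 <= w v) -> 0 <= mwhvc_beta eps f <= 1 ->
  Inv E w (mwhvc_beta eps f) (init_state E w eps f).
Proof.
move=> hw /andP[b0 b1].
have g0 : forall v, 0 <= w v / (#|edges_of E v|)%:R by move=> v; rewrite divr_ge0.
have d0 : forall e, 0 <= deal0 E w eps f e by move=> e; rewrite /deal0 mulr_ge0 // setmin_ge0.
have S : forall v, \sum_(e in edges_of E v) deal0 E w eps f e <= mwhvc_beta eps f * w v.
  move=> v; apply: le_trans (_ : \sum_(e in edges_of E v) mwhvc_beta eps f * (w v / (#|edges_of E v|)%:R) <= _).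
    apply: ler_sum => e; rewrite inE => /andP[_ ve].
    by rewrite /deal0 ler_wpM2l // (setmin_le _ ve).
  rewrite sumr_const; case: (posnP #|edges_of E v|) => [->|n0]; first by rewrite mulr0n mulr_ge0.
  rewrite -[X in X <= _]mulr_natr -!mulrA mulVf ?mulr1 // pnatr_eq0 -lt0n; exact: n0.
split; first by []. split; first by [].
split; first by move=> v; rewrite setD0; apply: S.
split; first by move=> v; apply: le_trans (S v) _; rewrite -[X in _ <= X]mul1r ler_wpM2r.
split; first by move=> v; rewrite inE.
split; first by move=> e; rewrite inE.
by move=> v; rewrite inE.
Qed.

Lemma sum_sub_le (R : realFieldType) (T : finType) (A B : {set T}) (F : T -> R) :
  A \subset B -> (forall x, 0 <= F x) -> \sum_(x in A) F x <= \sum_(x in B) F x.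
Proof.
move=> /subsetP AB F0; rewrite [X in _ <= X]big_mkcond [X in X <= _]big_mkcond /=.
apply: ler_sum => x _; case: ifP => xA; first by rewrite (AB _ xA).
by case: ifP.
Qed.

Lemma sumD_if (R : realFieldType) (T : finType) (A B : {set T}) (F : T -> R) :
  \sum_(x in A :\: B) F x = \sum_(x in A) (if x \in B then 0 else F x).
Proof.
rewrite big_mkcond [X in _ = X]big_mkcond /=; apply: eq_bigr => x _.
by rewrite inE; case: (x \in B); case: (x \in A).
Qed.

Lemma Inv_step_abs (R : realFieldType) (V : finType) (E : {set {set V}}) (w : V -> R) (b alpha : R) s
  (J : {set V}) (cov' : {set {set V}}) (deal' delta' : {set V} -> R) :
  (forall v, 0 <= w v) -> 0 <= b <= 1 -> 1 < alpha ->
  Inv E w b s ->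
  (forall v, (v \in J) = ~~ vterminated E s v && ((1 - b) * w v <= \sum_(e in edges_of E v) st_delta s e)) ->
  (forall e, (e \in cov') = (e \in st_cov s) || ((e \in E) && [exists v in e, v \in J])) ->
  (forall e, deal' e = if e \in cov' then st_deal s e
                 else if [exists v in e, b / alpha * w v < \sum_(e in edges_of E v :\: cov') st_deal s e]
                 then st_deal s e else alpha * st_deal s e) ->
  (forall e, delta' e = if e \in cov' then st_delta s e else st_delta s e + deal' e) ->
  Inv E w b (State (st_C s :|: J) cov' deal' delta').
Proof.
move=> hw /andP[b0 b1] ha [d0 [de0 [I3 [I4 [I5 [I6 I7]]]]]] HJ Hcov Hdeal Hdelta.
have a0 : 0 < alpha by apply: lt_trans ha.
have covS : forall e, e \in st_cov s -> e \in cov' by move=> e he; rewrite Hcov he.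
have covJ : forall v e, v \in J -> e \in edges_of E v -> e \in cov'.
  move=> v e vJ; rewrite inE => /andP[eE ve]; rewrite Hcov eE; apply/orP; right.
  by apply/existsP; exists v; rewrite ve.
have dl0 : forall e, 0 <= deal' e.
  by move=> e; rewrite Hdeal; case: ifP => _ //; case: ifP => _ //; rewrite mulr_ge0 // ltW.
have I3' : forall v, \sum_(e in edges_of E v :\: cov') deal' e <= b * w v.
  move=> v.
  have sub : edges_of E v :\: cov' \subset edges_of E v :\: st_cov s.
    apply/subsetP => e; rewrite !inE => /andP[nc ->]; rewrite andbT.
    by apply: contraNN nc; apply: covS.
  case: (boolP (b / alpha * w v < \sum_(e in edges_of E v :\: cov') st_deal s e)) => st.
    rewrite (eq_bigr (st_deal s)); first by apply: le_trans (I3 v); apply: sum_sub_le.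
    move=> e; rewrite !inE => /andP[nc /andP[_ ve]]; rewrite Hdeal (negbTE nc).
    by case: ifP => // /existsP; case; exists v; rewrite ve.
  rewrite -leNgt in st.
  apply: le_trans (_ : \sum_(e in edges_of E v :\: cov') alpha * st_deal s e <= _).
    apply: ler_sum => e _; rewrite Hdeal; case: ifP => _.
      by rewrite ler_peMl // ltW.
    by case: ifP => _ //; rewrite ler_peMl // ltW.
  rewrite -mulr_sumr; apply: le_trans (_ : alpha * (b / alpha * w v) <= _).
    by rewrite ler_wpM2l // ltW.
  by rewrite mulrA mulrCA mulfV ?mulr1 // gt_eqF.
have C'cov : forall v, v \in st_C s :|: J -> edges_of E v \subset cov'.
  move=> v; rewrite inE => /orP[vC|vJ]; apply/subsetP => e he.
    by apply: covS; apply: (subsetP (I5 v vC)).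
  by apply: (covJ v).
have deleq : forall v, edges_of E v \subset cov' ->
    \sum_(e in edges_of E v) delta' e = \sum_(e in edges_of E v) st_delta s e.
  move=> v /subsetP sub; apply: eq_bigr => e he; by rewrite Hdelta sub.
split; first by [].
split; first by move=> e /=; rewrite Hdelta; case: ifP => _ //; rewrite addr_ge0.
split; first by [].
split.
  move=> v; case: (boolP (edges_of E v \subset cov')) => sub; first by rewrite deleq.
  have nC : v \notin st_C s by apply: contraNN sub => vC; apply: C'cov; rewrite inE vC.
  have nJ : v \notin J by apply: contraNN sub => vJ; apply: C'cov; rewrite inE vJ orbT.
  have nT : ~~ vterminated E s v.
    rewrite /vterminated negb_or nC /=; apply: contraNN sub => /subsetP H.
    by apply/subsetP => e /H; apply: covS.
  move: nJ; rewrite HJ nT /= -ltNge => lt.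
  have -> : \sum_(e in edges_of E v) delta' e =
       \sum_(e in edges_of E v) st_delta s e + \sum_(e in edges_of E v :\: cov') deal' e.
    rewrite sumD_if -big_split /=; apply: eq_bigr => e _; rewrite Hdelta.
    by case: ifP => _; rewrite ?addr0.
  have := I3' v; lra.
split; first by [].
split.
  move=> e; rewrite Hcov => /orP[ec|/andP[eE /existsP[v /andP[ve vJ]]]].
    case/andP: (I6 e ec) => -> /set0Pn[v]; rewrite inE => /andP[ve vC] /=.
    by apply/set0Pn; exists v; rewrite !inE ve vC.
  by rewrite eE /=; apply/set0Pn; exists v; rewrite !inE ve vJ orbT.
move=> v vC'; rewrite /= deleq ?C'cov //.
move: vC'; rewrite inE => /orP[vC|]; first exact: I7.
by rewrite HJ => /andP[].
Qed.

Lemma Inv_step (R : realFieldType) (V : finType) (E : {set {set V}}) (w : V -> R) eps alpha f s :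
  (forall v, 0 <= w v) -> 0 <= mwhvc_beta eps f <= 1 -> 1 < alpha ->
  Inv E w (mwhvc_beta eps f) s -> Inv E w (mwhvc_beta eps f) (step E w eps alpha f s).
Proof.
move=> hw hb ha I; rewrite /step.
apply: (Inv_step_abs hw hb ha I).
- by move=> v; rewrite inE.
- by move=> e; rewrite !inE.
- by [].
- by [].
Qed.

Theorem mainTheorem3 (R : realFieldType) (V : finType) (E : {set {set V}})
    (f : nat) (w : V -> R) (eps alpha : R)
    (hrank : forall e, e \in E -> (0 < #|e| <= f)%N)
    (hDelta : (3 <= \max_(v : V) #|edges_of E v|)%N)
    (hw : forall v, 0 <= w v)
    (heps : 0 < eps <= 1)
    (halpha : 1 < alpha)
    (T : nat)
    (hT : terminated E (run E w eps alpha f T)) :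
  is_vertex_cover E (st_C (run E w eps alpha f T)) /\
  (forall x : V -> R, frac_cover E x ->
     \sum_(v in st_C (run E w eps alpha f T)) w v
       <= (f%:R + eps) * \sum_(v : V) w v * x v).
Proof.
case/andP: heps => e0 e1.
have f1 : (0 < f)%N.
  case: (set_0Vmem E) => [E0|[e eE]]; last by case/andP: (hrank e eE); apply: leq_trans.
  move: hDelta; rewrite big1 // => v _.
  suff -> : edges_of E v = set0 by rewrite cards0.
  by apply/setP => e; rewrite !inE E0 inE.
have fR : 0 < (f%:R : R) by rewrite ltr0n.
have fe : 0 < f%:R + eps by rewrite addr_gt0.
have hb : 0 <= mwhvc_beta eps f <= 1.
  by rewrite /mwhvc_beta divr_ge0 ?(ltW e0) ?(ltW fe) //= ler_pdivrMr // mul1r lerDr ler0n.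
have I : Inv E w (mwhvc_beta eps f) (run E w eps alpha f T).
  rewrite /run; elim: T {hT} => [|n IH] /=; first exact: Inv0 hw hb.
  exact: Inv_step hw hb halpha IH.
move: I; set s := run E w eps alpha f T => -[d0 [de0 [I3 [I4 [I5 [I6 I7]]]]]].
case/andP: hT => _ /forallP hcov.
split.
  move=> e eE; have := hcov e; rewrite eE /= => /I6 /andP[]//.
move=> x [x0 x1].
have key : (1 - mwhvc_beta eps f) * (f%:R + eps) = f%:R.
  by rewrite /mwhvc_beta mulrBl mul1r mulfVK ?gt_eqF // addrK.
set D := fun v => \sum_(e in edges_of E v) st_delta s e.
have S1 : f%:R * \sum_(v in st_C s) w v <= (f%:R + eps) * \sum_v D v.
  rewrite !mulr_sumr [X in _ <= X]big_mkcond /= [X in X <= _]big_mkcond /=.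
  apply: ler_sum => v _; case: ifP => vC; last first.
    rewrite mulr_ge0 ?(ltW fe) //; apply: sumr_ge0 => e _; exact: de0.
  rewrite -{1}key mulrAC [X in _ <= X]mulrC ler_wpM2r ?(ltW fe) //; exact: I7.
have S2 : \sum_v D v <= f%:R * \sum_(e in E) st_delta s e.
  rewrite /D sum_exch mulr_sumr; apply: ler_sum => e eE.
  rewrite sumr_const -[X in X <= _]mulr_natl ler_wpM2r // ler_nat.
  by case/andP: (hrank e eE).
have S3 : \sum_(e in E) st_delta s e <= \sum_v w v * x v.
  apply: le_trans (_ : \sum_(e in E) \sum_(v in e) st_delta s e * x v <= _).
    apply: ler_sum => e eE; rewrite -mulr_sumr -[X in X <= _]mulr1 ler_wpM2l //.
    exact: x1.
  rewrite -sum_exch; apply: ler_sum => v _.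
  rewrite -mulr_suml ler_wpM2r //; exact: I4.
have : f%:R * \sum_(v in st_C s) w v <= f%:R * ((f%:R + eps) * \sum_v w v * x v).
  apply: le_trans S1 _; rewrite mulrCA ler_wpM2l ?(ltW fe) //.
  apply: le_trans S2 _; rewrite ler_wpM2l ?(ltW fR) //.
by rewrite ler_pM2l.
Qed.
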